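(* Let $R$ be a commutative ring that is $\aleph_0$-self-injective. Then for any two countably generated ideals $I_1,I_2$ of $R$, $\mathrm{Ann}(I_1\cap I_2)=\mathrm{Ann}(I_1)+\mathrm{Ann}(I_2)$; that is, $R$ is an $\aleph_0$-IK ring.
   Context: $R$ is $\aleph_0$-self-injective if every $R$-homomorphism from a countably generated ideal $I$ of $R$ into $R$ extends to an $R$-homomorphism $R\to R$. For a subset $X$ of a commutative ring $R$, $\mathrm{Ann}(X)=\{r\in R: rx=0 \text{ for all } x\in X\}$. *)

(* Defs.v *)
From HB Require Import structures.
From mathcomp Require Import all_boot all_order all_algebra.
Set Implicit Arguments. Unset Strict Implicit. Unset Printing Implicit Defensive.
Import GRing.Theory.
Local Open Scope ring_scope.

Section Defs.
Variable R : comPzRingType.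

Definition gen_ideal (g : nat -> R) : R -> Prop :=
  fun x => exists (n : nat) (c : nat -> R), x = \sum_(i < n) c i * g i.

Definition ctbl_gen_ideal (I : R -> Prop) : Prop :=
  exists g : nat -> R, forall x, I x <-> gen_ideal g x.

(* f is an R-homomorphism from the ideal I into R (values of f outside I
   are irrelevant). *)
Definition Rhom_on (I : R -> Prop) (f : R -> R) : Prop :=
  (forall x y, I x -> I y -> f (x + y) = f x + f y) /\
  (forall r x, I x -> f (r * x) = r * f x).

Definition aleph0_self_injective : Prop :=
  forall (I : R -> Prop) (f : R -> R),
    ctbl_gen_ideal I -> Rhom_on I f ->
    exists g : R -> R, Rhom_on (fun _ => True) g /\ (forall x, I x -> g x = f x).

Definition Ann (X : R -> Prop) : R -> Prop :=
  fun r => forall x, X x -> r * x = 0.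

Definition setI_R (A B : R -> Prop) : R -> Prop := fun x => A x /\ B x.

Definition ideal_sum (A B : R -> Prop) : R -> Prop :=
  fun x => exists a b, A a /\ B b /\ x = a + b.

End Defs.

(* Main.v *)
Require Import Defs.
From HB Require Import structures.
From mathcomp Require Import all_boot all_order all_algebra.
From Stdlib Require Import ClassicalEpsilon.
Local Open Scope ring_scope.
Import GRing.Theory.

Section Aux.
Variable R : comPzRingType.

Lemma gen_widen (g c : nat -> R) n N : (n <= N)%N ->
  \sum_(i < n) c i * g i = \sum_(i < N) (if (i < n)%N then c i else 0) * g i.
Proof.
move=> hn; rewrite (big_ord_widen N (fun i => c i * g i) hn) big_mkcond /=.
by apply: eq_bigr => i _; case: ifP => //; rewrite mul0r.
Qed.

Lemma gen0 g : gen_ideal g (0 : R).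
Proof. by exists 0%N, (fun _ => 0); rewrite big_ord0. Qed.

Lemma genD g (x y : R) : gen_ideal g x -> gen_ideal g y -> gen_ideal g (x + y).
Proof.
move=> [n [c ->]] [m [d ->]].
exists (n + m)%N, (fun i => (if (i < n)%N then c i else 0) + (if (i < m)%N then d i else 0)).
rewrite (@gen_widen g c n (n + m) (leq_addr m n)) (@gen_widen g d m (n + m) (leq_addl n m)) -big_split /=.
by apply: eq_bigr => i _; rewrite mulrDl.
Qed.

Lemma genM g (r x : R) : gen_ideal g x -> gen_ideal g (r * x).
Proof.
move=> [n [c ->]]; exists n, (fun i => r * c i); rewrite mulr_sumr.
by apply: eq_bigr => i _; rewrite mulrA.
Qed.

Lemma genG g k : gen_ideal g (g k : R).
Proof.
exists k.+1, (fun i => ((i == k)%N)%:R); rewrite big_ord_recr /= eqxx mul1r big1 ?add0r //.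
by move=> i _; rewrite (ltn_eqF (ltn_ord i)) mul0r.
Qed.

Lemma genN g (x : R) : gen_ideal g x -> gen_ideal g (- x).
Proof. by move=> h; rewrite -mulN1r; apply: genM. Qed.

Lemma gen_ind g (P : R -> Prop) : P 0 -> (forall x y, P x -> P y -> P (x + y)) ->
  (forall r k, P (r * g k)) -> forall x, gen_ideal g x -> P x.
Proof.
move=> P0 PD PG x [n [c ->]]; elim: n => [|n IH]; first by rewrite big_ord0.
by rewrite big_ord_recr /=; apply: PD.
Qed.

Definition inter (g1 g2 : nat -> R) : nat -> R :=
  fun n => if odd n then g2 n./2 else g1 n./2.

Lemma inter_sum g1 g2 x : gen_ideal (inter g1 g2) x <->
  ideal_sum (gen_ideal g1) (gen_ideal g2) x.
Proof.
split.
  apply: gen_ind.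
  - by exists 0, 0; split; [apply: gen0|split; [apply: gen0|rewrite addr0]].
  - move=> u v [a [b [ha [hb ->]]]] [a' [b' [ha' [hb' ->]]]].
    exists (a + a'), (b + b'); split; first exact: genD.
    split; first exact: genD.
    by rewrite addrACA.
  - move=> r k; rewrite /inter; case: (odd k).
      by exists 0, (r * g2 k./2); split; [apply: gen0|split; [apply/genM/genG|rewrite add0r]].
    by exists (r * g1 k./2), 0; split; [apply/genM/genG|split; [apply: gen0|rewrite addr0]].
move=> [a [b [ha [hb ->]]]]; apply: genD.
  move: a ha; apply: gen_ind; [exact: gen0|by move=> *; apply: genD|].
  move=> r k; have -> : g1 k = inter g1 g2 (k.*2) by rewrite /inter odd_double doubleK.
  by apply/genM/genG.
move: b hb; apply: gen_ind; [exact: gen0|by move=> *; apply: genD|].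
move=> r k; have -> : g2 k = inter g1 g2 (k.*2.+1).
  by rewrite /inter /= odd_double /= uphalf_double.
by apply/genM/genG.
Qed.

End Aux.

Theorem lemma2p2 (R : comPzRingType) :
  aleph0_self_injective R ->
  forall I1 I2 : R -> Prop,
    ctbl_gen_ideal I1 -> ctbl_gen_ideal I2 ->
    forall x : R, Ann (setI_R I1 I2) x <-> ideal_sum (Ann I1) (Ann I2) x.
Proof.
move=> inj I1 I2 [g1 hg1] [g2 hg2] x; split; last first.
  move=> [a [b [ha [hb ->]]]] y [y1 y2].
  by rewrite mulrDl ha // hb // addr0.
move=> hx.
have key : forall a b a' b', I1 a -> I2 b -> I1 a' -> I2 b' -> a + b = a' + b' ->
    x * a = x * a'.
  move=> a b a' b' ha hb ha' hb' e; apply/eqP; rewrite -subr_eq0 -mulrBr; apply/eqP.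
  apply: hx; split.
    by apply/hg1; apply: genD; [apply/hg1|apply/genN/hg1].
  have -> : a - a' = b' - b.
    by apply/eqP; rewrite subr_eq -(addrK b a) e (addrC a') addrAC.
  by apply/hg2; apply: genD; [apply/hg2|apply/genN/hg2].
pose J := ideal_sum I1 I2.
pose pick (y : R) := epsilon (inhabits (0 : R)) (fun a => I1 a /\ exists b, I2 b /\ y = a + b).
have pickP : forall y, J y -> I1 (pick y) /\ exists b, I2 b /\ y = pick y + b.
  move=> y [a [b [ha [hb e]]]]; apply: (@epsilon_spec R (inhabits (0:R)) (fun a => I1 a /\ exists b, I2 b /\ y = a + b)).
  by exists a; split => //; exists b.
pose f y := x * pick y.
have fE : forall a b, I1 a -> I2 b -> f (a + b) = x * a.
  move=> a b ha hb; have [hp [b' [hb' e]]] := pickP (a + b) (ex_intro _ a (ex_intro _ b (conj ha (conj hb erefl)))).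
  by rewrite /f; apply: (key _ b' _ b) => //; rewrite -e.
have I1D : forall u v, I1 u -> I1 v -> I1 (u + v).
  by move=> u v /hg1 hu /hg1 hv; apply/hg1; apply: genD.
have I2D : forall u v, I2 u -> I2 v -> I2 (u + v).
  by move=> u v /hg2 hu /hg2 hv; apply/hg2; apply: genD.
have I1M : forall r u, I1 u -> I1 (r * u).
  by move=> r u /hg1 hu; apply/hg1; apply: genM.
have I2M : forall r u, I2 u -> I2 (r * u).
  by move=> r u /hg2 hu; apply/hg2; apply: genM.
have I10 : I1 0 by apply/hg1; apply: gen0.
have I20 : I2 0 by apply/hg2; apply: gen0.
have hom : Rhom_on J f.
  split.
    move=> u v [a [b [ha [hb ->]]]] [a' [b' [ha' [hb' ->]]]].
    rewrite addrACA !fE ?mulrDr //; by [apply: I1D|apply: I2D].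
  move=> r u [a [b [ha [hb ->]]]].
  rewrite mulrDr !fE; [by rewrite mulrCA|by apply: I1M|by apply: I2M|done|done].
have ctJ : ctbl_gen_ideal J.
  exists (@inter R g1 g2) => y; rewrite inter_sum /J /ideal_sum.
  split; move=> [a [b [ha [hb e]]]]; exists a, b.
    by split; [apply/hg1|split; [apply/hg2|]].
  by split; [apply/hg1|split; [apply/hg2|]].
have [g [[_ gM] gf]] := inj J f ctJ hom.
have gE : forall r, g r = r * g 1.
  by move=> r; rewrite -{1}(mulr1 r) gM.
exists (x - g 1), (g 1); split; last split; last by rewrite subrK.
  move=> a ha; have Ja : J a by exists a, 0; rewrite addr0.
  have := gf a Ja; rewrite gE -{2}(addr0 a) fE // => e.
  by rewrite mulrBl (mulrC (g 1)) e subrr.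
move=> b hb; have Jb : J b by exists 0, b; rewrite add0r.
have := gf b Jb; rewrite gE -{2}(add0r b) fE // mulr0 => e.
by rewrite mulrC.
Qed.
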